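(* Let $\mathcal D=\{\mathbf D_i:i\in I\}$ be a class of upwards-closed dependency notions, and for each $i\in I$ let $\gamma_i:\mathbb N\to\mathbb N$ be such that $\mathbf D_i$ is $\gamma_i$-bounded. Let $\phi\in\mathbf{FO}(=\!(\cdot),\mathcal D,\sqcup)$ be a formula in which each $\mathbf D_i$ occurs $k_i$ times, and let $\nu_\phi(n)=\sum_{i\in I}k_i\gamma_i(n)$. Then for all finite structures $\mathfrak M$ and all teams $X$: if $\mathfrak M\models_X\phi$, then there exists $Y\subseteq X$ with $|Y|\le\nu_\phi(|M|)$ and $\mathfrak M\models_Y\phi$.
   Context: Team semantics (lax version). For a structure $\mathfrak M$ with domain $M$, a team $X$ is a (possibly empty) set of assignments $s:V\to M$, $V$ a finite set of variables; $X(\vec v)=\{s(\vec v):s\in X\}$. Satisfaction for formulas in negation normal form: first-order literal $\alpha$: every $s\in X$ satisfies $\alpha$ (Tarski); $\psi\vee\theta$: $X=Y\cup Z$ with $\mathfrak M\models_Y\psi$, $\mathfrak M\models_Z\theta$; $\psi\wedge\theta$: both; $\exists v\psi$: some $F:X\to\mathcal P(M)\setminus\{\emptyset\}$ with $\mathfrak M\models_{X[F/v]}\psi$, $X[F/v]=\{s[m/v]:s\in X,m\in F(s)\}$; $\forall v\psi$: $\mathfrak M\models_{X[M/v]}\psi$, $X[M/v]=\{s[m/v]:s\in X,m\in M\}$. A $k$-ary dependency notion $\mathbf D$ is an isomorphism-closed class of structures $(M,R)$, $R$ a $k$-ary relation; $\mathfrak M\models_X\mathbf D\vec v$ iff $(M,X(\vec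 v))\in\mathbf D$. $\mathbf D$ is upwards-closed if $(M,R)\in\mathbf D$, $R\subseteq S$ imply $(M,S)\in\mathbf D$. For $\gamma:\mathbb N\to\mathbb N$, $\mathbf D$ is $\gamma$-bounded if for all finite structures $\mathfrak M$, teams $X$ and tuples $\vec v$, whenever $\mathfrak M\models_X\mathbf D\vec v$ there is $Y\subseteq X$ with $|Y|\le\gamma(|M|)$ and $\mathfrak M\models_Y\mathbf D\vec v$. Constancy atoms (all arities): $\mathfrak M\models_X=\!(\vec v)$ iff $s(\vec v)=s'(\vec v)$ for all $s,s'\in X$. Classical disjunction: $\mathfrak M\models_X\phi\sqcup\psi$ iff $\mathfrak M\models_X\phi$ or $\mathfrak M\models_X\psi$. $\mathbf{FO}(=\!(\cdot),\mathcal D,\sqcup)$ is first-order logic in negation normal form extended with constancy atoms, the atoms of $\mathcal D$, and $\sqcup$. *)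

(* Defs.v *)
From mathcomp Require Import all_boot.
From mathcomp Require Import finmap.

Set Implicit Arguments.
Unset Strict Implicit.
Unset Printing Implicit Defensive.

Local Open Scope fset_scope.
Local Open Scope fmap_scope.

(* Variables are natural numbers.  An assignment with finite domain V is a
   finitely supported map {fmap nat -> M} with domf s = V.  A team is a finite
   set of assignments, all with the same domain. *)
Definition team_on (M : finType) (V : {fset nat}) (X : {fset {fmap nat -> M}}) :=
  forall s, s \in X -> domf s = V.

Definition teamrel (M : finType) (k : nat) (X : {fset {fmap nat -> M}})
    (vs : k.-tuple nat) : {set k.-tuple M} :=
  [set t : k.-tuple M |
     has (fun s : {fmap nat -> M} => [seq s.[? x] | x <- vs] == [seq Some y | y <- t])
         (enum_fset X)].

(* A k-ary dependency notion, given by its finite members (M, R), R a k-ary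
   relation on the finite set M. *)
Definition dep_notion (k : nat) := forall M : finType, {set k.-tuple M} -> Prop.

Definition iso_closed (k : nat) (D : dep_notion k) :=
  forall (M N : finType) (f : M -> N), bijective f ->
  forall R : {set k.-tuple M}, D M R <-> D N [set map_tuple f t | t in R].

Definition upwards_closed (k : nat) (D : dep_notion k) :=
  forall (M : finType) (R S : {set k.-tuple M}), R \subset S -> D M R -> D M S.

Definition bounded (k : nat) (D : dep_notion k) (gamma : nat -> nat) :=
  forall (M : finType) (V : {fset nat}) (X : {fset {fmap nat -> M}})
         (vs : k.-tuple nat),
  team_on V X -> {subset vs <= V} ->
  D M (teamrel X vs) ->
  exists Y : {fset {fmap nat -> M}},
    Y `<=` X /\ #|` Y| <= gamma #|M| /\ D M (teamrel Y vs).

Section Syntax.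
Variables (Fs Rs I : Type) (ar : I -> nat).

(* first-order terms over function symbols Fs (constants = 0-ary symbols) *)
Inductive term : Type :=
| TVar of nat
| TApp of Fs & seq term.

(* formulas of FO(=(.), D, \sqcup) in negation normal form *)
Inductive form : Type :=
| FEq of term & term
| FNeq of term & term
| FRel of Rs & seq term
| FNRel of Rs & seq term
| FConst of seq nat
| FDep (i : I) of (ar i).-tuple nat
| FAnd of form & form
| FOr of form & form            (* team (tensor) disjunction *)
| FCor of form & form           (* classical disjunction \sqcup *)
| FEx of nat & form
| FAll of nat & form.

Fixpoint tfv (t : term) : seq nat :=
  match t with
  | TVar x => [:: x]
  | TApp _ ts => (fix go ts := match ts with
                               | [::] => [::]
                               | t :: ts => tfv t ++ go ts end) ts
  end.

Definition tsfv (ts : seq term) : seq nat := flatten (map tfv ts).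

Fixpoint fv (phi : form) : seq nat :=
  match phi with
  | FEq t1 t2 | FNeq t1 t2 => tfv t1 ++ tfv t2
  | FRel _ ts | FNRel _ ts => tsfv ts
  | FConst vs => vs
  | FDep _ vs => vs
  | FAnd p q | FOr p q | FCor p q => fv p ++ fv q
  | FEx v p | FAll v p => [seq x <- fv p | x != v]
  end.

Fixpoint occ (phi : form) : seq I :=
  match phi with
  | FDep i _ => [:: i]
  | FAnd p q | FOr p q | FCor p q => occ p ++ occ q
  | FEx _ p | FAll _ p => occ p
  | _ => [::]
  end.

(* nu_phi(n) = sum_i k_i * gamma_i(n), written as a sum over occurrences *)
Definition nu (gamma : I -> nat -> nat) (phi : form) (n : nat) : nat :=
  \sum_(i <- occ phi) gamma i n.

Section Semantics.
Variables (M : finType) (funI : Fs -> seq M -> M) (relI : Rs -> seq M -> bool).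
Variable D : forall i : I, dep_notion (ar i).

Fixpoint teval (s : {fmap nat -> M}) (t : term) : option M :=
  match t with
  | TVar x => s.[? x]
  | TApp f ts =>
      omap (funI f)
        ((fix go ts := match ts with
                       | [::] => Some [::]
                       | t :: ts => match teval s t, go ts with
                                    | Some a, Some l => Some (a :: l)
                                    | _, _ => None end end) ts)
  end.

Fixpoint tseval (s : {fmap nat -> M}) (ts : seq term) : option (seq M) :=
  match ts with
  | [::] => Some [::]
  | t :: ts => match teval s t, tseval s ts with
               | Some a, Some l => Some (a :: l)
               | _, _ => None end
  end.

Definition supp_team (X : {fset {fmap nat -> M}}) (F : {fmap nat -> M} -> {fset M})
    (v : nat) : {fset {fmap nat -> M}} :=
  [fset s.[v <- m] | s in X, m in F s].

Definition dup_team (X : {fset {fmap nat -> M}}) (v : nat) : {fset {fmap nat -> M}} :=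
  [fset s.[v <- m] | s in X, m in [fset m0 | m0 in enum M]].

(* lax team semantics *)
Fixpoint sat (phi : form) (X : {fset {fmap nat -> M}}) : Prop :=
  match phi with
  | FEq t1 t2 => forall s, s \in X ->
      exists a, teval s t1 = Some a /\ teval s t2 = Some a
  | FNeq t1 t2 => forall s, s \in X ->
      exists a b, teval s t1 = Some a /\ teval s t2 = Some b /\ a <> b
  | FRel r ts => forall s, s \in X ->
      exists l, tseval s ts = Some l /\ relI r l
  | FNRel r ts => forall s, s \in X ->
      exists l, tseval s ts = Some l /\ ~~ relI r l
  | FConst vs => forall s s', s \in X -> s' \in X ->
      [seq s.[? x] | x <- vs] = [seq s'.[? x] | x <- vs]
  | FDep i vs => @D i M (teamrel X vs)
  | FAnd p q => sat p X /\ sat q X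
  | FOr p q => exists Y Z, X = Y `|` Z /\ sat p Y /\ sat q Z
  | FCor p q => sat p X \/ sat q X
  | FEx v p => exists F : {fmap nat -> M} -> {fset M},
      (forall s, s \in X -> F s != fset0) /\ sat p (supp_team X F v)
  | FAll v p => sat p (dup_team X v)
  end.

End Semantics.
End Syntax.

(* Main.v *)
Require Import Defs.
From mathcomp Require Import all_boot.
From mathcomp Require Import finmap.
Local Open Scope fset_scope.
Local Open Scope fmap_scope.

Set Implicit Arguments.
Unset Strict Implicit.

Lemma teamrel_sub (M : finType) k (Y Z : {fset {fmap nat -> M}}) (vs : k.-tuple nat) :
  Y `<=` Z -> teamrel Y vs \subset teamrel Z vs.
Proof.
move=> sub; apply/subsetP => t; rewrite !inE => /hasP [s hs e].
by apply/hasP; exists s => //; apply: (fsubsetP sub).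
Qed.

Lemma supp_mono (M : finType) (X Z : {fset {fmap nat -> M}}) F v :
  Z `<=` X -> supp_team Z F v `<=` supp_team X F v.
Proof.
move=> sub; apply/fsubsetP => s' /imfset2P [s hs [m hm ->]].
by apply: in_imfset2 => //; apply: (fsubsetP sub).
Qed.

Lemma supp_dom (M : finType) V (X : {fset {fmap nat -> M}}) F v :
  team_on V X -> team_on (v |` V) (supp_team X F v).
Proof.
move=> tX s' /imfset2P [s hs [m hm ->]].
by rewrite dom_setf (tX s hs).
Qed.

Lemma pre_lemma (M : finType) (X Y' : {fset {fmap nat -> M}}) F v :
  Y' `<=` supp_team X F v ->
  exists Y, Y `<=` X /\ #|` Y| <= #|` Y'| /\
    forall Z, Y `<=` Z -> Y' `<=` supp_team Z F v.
Proof.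
move=> sub.
pose P (s' s : {fmap nat -> M}) := has (fun m => s.[v <- m] == s') (enum_fset (F s)).
pose g s' := nth s' (enum_fset X) (find (P s') (enum_fset X)).
have hg : forall s', s' \in Y' -> g s' \in X /\ P s' (g s').
  move=> s' hs'; have := fsubsetP sub s' hs' => /imfset2P [s hs [m hm e]].
  have hh : has (P s') (enum_fset X).
    by apply/hasP; exists s => //; apply/hasP; exists m => //; rewrite e.
  split; last exact: nth_find.
  by apply: mem_nth; rewrite -has_find.
exists [fset g s' | s' in Y']; split; [|split].
- by apply/fsubsetP => x /imfsetP [s' hs' ->]; case: (hg s' hs').
- exact: leq_imfset_card.
- move=> Z sZ; apply/fsubsetP => s' hs'.
  have [_ /hasP [m hm /eqP e]] := hg s' hs'.
  rewrite -e; apply: in_imfset2 => //.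
  by apply: (fsubsetP sZ); apply: in_imfset.
Qed.

Unset Implicit Arguments.
Section Main.
Variables (Fs Rs I : Type) (ar : I -> nat)
    (D : forall i : I, dep_notion (ar i)) (gamma : I -> nat -> nat)
    (HDup : forall i, upwards_closed (D i))
    (HDbd : forall i, bounded (D i) (gamma i))
    (M : finType) (funI : Fs -> seq M -> M) (relI : Rs -> seq M -> bool).

Lemma key (phi : form Fs Rs ar) : forall V (X : {fset {fmap nat -> M}}),
  team_on V X -> {subset fv phi <= V} ->
  sat funI relI D phi X ->
  exists Y : {fset {fmap nat -> M}},
    Y `<=` X /\ #|` Y| <= nu gamma phi #|M| /\
    forall Z, Y `<=` Z -> Z `<=` X -> sat funI relI D phi Z.
Proof.
elim: phi => [t1 t2|t1 t2|r ts|r ts|vs|i vs|p IHp q IHq|p IHp q IHq|p IHp q IHq|v p IHp|v p IHp]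
  V X tX sfv /=.
- move=> H; exists fset0; rewrite fsub0set cardfs0; split=> // ; split=> // Z _ sZ s hs.
  by apply: H; apply: (fsubsetP sZ).
- move=> H; exists fset0; rewrite fsub0set cardfs0; split=> // ; split=> // Z _ sZ s hs.
  by apply: H; apply: (fsubsetP sZ).
- move=> H; exists fset0; rewrite fsub0set cardfs0; split=> // ; split=> // Z _ sZ s hs.
  by apply: H; apply: (fsubsetP sZ).
- move=> H; exists fset0; rewrite fsub0set cardfs0; split=> // ; split=> // Z _ sZ s hs.
  by apply: H; apply: (fsubsetP sZ).
- move=> H; exists fset0; rewrite fsub0set cardfs0; split=> // ; split=> // Z _ sZ s s' hs hs'.
  by apply: H; apply: (fsubsetP sZ).
- move=> H; have [Y [sY [cY HY]]] := HDbd i M V X vs tX sfv H.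
  exists Y; split=> //; split; first by rewrite /nu /= big_seq1.
  move=> Z sYZ _; apply: HDup HY; exact: teamrel_sub.
- move=> [Hp Hq].
  have sp : {subset fv p <= V} by move=> x hx; apply: sfv; rewrite mem_cat hx.
  have sq : {subset fv q <= V} by move=> x hx; apply: sfv; rewrite mem_cat hx orbT.
  have [Y1 [s1 [c1 H1]]] := IHp V X tX sp Hp.
  have [Y2 [s2 [c2 H2]]] := IHq V X tX sq Hq.
  exists (Y1 `|` Y2); split; first by rewrite fsubUset s1 s2.
  split.
    rewrite /nu /= big_cat /=; apply: leq_trans (leq_card_fsetU Y1 Y2).1 _.
    exact: leq_add.
  move=> Z sYZ sZX; split.
    by apply: H1 => //; apply: fsubset_trans sYZ; apply: fsubsetUl.
  by apply: H2 => //; apply: fsubset_trans sYZ; apply: fsubsetUr.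
- move=> [X1 [X2 [eX [Hp Hq]]]].
  have sp : {subset fv p <= V} by move=> x hx; apply: sfv; rewrite mem_cat hx.
  have sq : {subset fv q <= V} by move=> x hx; apply: sfv; rewrite mem_cat hx orbT.
  have sX1 : X1 `<=` X by rewrite eX fsubsetUl.
  have sX2 : X2 `<=` X by rewrite eX fsubsetUr.
  have t1 : team_on V X1 by move=> s hs; apply: tX; apply: (fsubsetP sX1).
  have t2 : team_on V X2 by move=> s hs; apply: tX; apply: (fsubsetP sX2).
  have [Y1 [s1 [c1 H1]]] := IHp V X1 t1 sp Hp.
  have [Y2 [s2 [c2 H2]]] := IHq V X2 t2 sq Hq.
  exists (Y1 `|` Y2); split.
    by rewrite fsubUset (fsubset_trans s1 sX1) (fsubset_trans s2 sX2).
  split.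
    rewrite /nu /= big_cat /=; apply: leq_trans (leq_card_fsetU Y1 Y2).1 _.
    exact: leq_add.
  move=> Z sYZ sZX; exists (Z `&` X1), (Z `&` X2); split.
    by rewrite -fsetIUr -eX; apply/esym/fsetIidPl.
  move: sYZ; rewrite fsubUset => /andP [h1 h2].
  split.
    by apply: H1; [rewrite fsubsetI h1 s1| apply: fsubsetIr].
  by apply: H2; [rewrite fsubsetI h2 s2| apply: fsubsetIr].
- have sp : {subset fv p <= V} by move=> x hx; apply: sfv; rewrite mem_cat hx.
  have sq : {subset fv q <= V} by move=> x hx; apply: sfv; rewrite mem_cat hx orbT.
  case=> [Hp|Hq].
    have [Y [s [c H]]] := IHp V X tX sp Hp.
    exists Y; split=> //; split; last by move=> Z a b; left; apply: H.
    by rewrite /nu /= big_cat /= (leq_trans c) // leq_addr.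
  have [Y [s [c H]]] := IHq V X tX sq Hq.
  exists Y; split=> //; split; last by move=> Z a b; right; apply: H.
  by rewrite /nu /= big_cat /= (leq_trans c) // leq_addl.
- move=> [F [HF Hp]].
  have sp : {subset fv p <= v |` V}.
    move=> x hx; rewrite !inE; case: eqP => //= /eqP ne; apply: sfv.
    by rewrite mem_filter ne.
  have [Y' [s' [c' H']]] := IHp _ _ (@supp_dom M V X F v tX) sp Hp.
  have [Y [sY [cY HY]]] := pre_lemma s'.
  exists Y; split=> //; split; first exact: leq_trans cY c'.
  move=> Z sYZ sZX; exists F; split.
    by move=> s hs; apply: HF; apply: (fsubsetP sZX).
  by apply: H'; [apply: HY | apply: supp_mono].
- move=> Hp.
  have sp : {subset fv p <= v |` V}.
    move=> x hx; rewrite !inE; case: eqP => //= /eqP ne; apply: sfv.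
    by rewrite mem_filter ne.
  pose F := fun _ : {fmap nat -> M} => [fset m0 | m0 in enum M].
  have E : forall X, dup_team X v = supp_team X F v by [].
  rewrite E in Hp.
  have [Y' [s' [c' H']]] := IHp _ _ (@supp_dom M V X F v tX) sp Hp.
  have [Y [sY [cY HY]]] := pre_lemma s'.
  exists Y; split=> //; split; first exact: leq_trans cY c'.
  move=> Z sYZ sZX; rewrite E.
  by apply: H'; [apply: HY | apply: supp_mono].
Qed.

End Main.

Theorem mainTheorem8 (Fs Rs I : Type) (ar : I -> nat)
    (D : forall i : I, dep_notion (ar i)) (gamma : I -> nat -> nat)
    (HDiso : forall i, iso_closed (D i))
    (HDup : forall i, upwards_closed (D i))
    (HDbd : forall i, bounded (D i) (gamma i))
    (phi : form Fs Rs ar)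
    (M : finType) (funI : Fs -> seq M -> M) (relI : Rs -> seq M -> bool)
    (V : {fset nat}) (X : {fset {fmap nat -> M}}) :
  team_on V X -> {subset fv phi <= V} ->
  sat funI relI D phi X ->
  exists Y : {fset {fmap nat -> M}},
    Y `<=` X /\ #|` Y| <= nu gamma phi #|M| /\ sat funI relI D phi Y.
Proof.
move=> tX sfv H.
have [Y [sY [cY HY]]] := key Fs Rs I ar D gamma HDup HDbd M funI relI phi V X tX sfv H.
by exists Y; split=> //; split=> //; apply: HY.
Qed.
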